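(* Let $G_1$ and $G_2$ be OPERA DAGs with $G_1\sim G_2$. Then $G_1$ and $G_2$ are root consistent: for every event $v$ contained in both DAGs and every $j\ge 1$, if $v$ is a root of frame $j$ in $G_1$, then $v$ is a root of frame $j$ in $G_2$.
   Context: An OPERA DAG is a finite directed acyclic graph whose vertices are events. Each event $v$ has a creator $cr(v)$ among a fixed finite set of nodes, the same for both DAGs. Each node $i$ has weight (validating power) $w_i>0$, and $W=\sum_i w_i$. An edge $(u,v)$ means that $u$ references $v$ as a parent. An event $u$ reaches an event $v$ if $v$ is $u$ or an ancestor of $u$. $G[v]$ is the subgraph induced on $v$ and all its ancestors, and $G_1\sim G_2$ means $G_1[v]=G_2[v]$ for every event $v$ in both DAGs. A leaf event is the first event created by a node (an event with no parent created by the same node). Roots and frames are defined recursively in a DAG $G$. The root set $R_1$ of frame 1 consists of all leaf events. For $k\ge 1$, the root set $R_{k+1}$ consists of all events $r$ with $r\notin R_1\cup\dots\cup R_k$ such that the creators of the roots in $R_k$ reached by $r$ have total weight greater than $2W/3$. An event in $R_j$ is a root of frame $j$. *)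

(* Defs.v *)
From HB Require Import structures.
From mathcomp Require Import all_boot all_order all_algebra.
Set Implicit Arguments. Unset Strict Implicit. Unset Printing Implicit Defensive.
Import Order.TTheory GRing.Theory Num.Theory.
Local Open Scope ring_scope.

(* Events live in a finite universe E; every event e has a creator cr e
   among the nodes N (a fixed finite set, common to both DAGs). *)

(* An OPERA DAG over the event universe E: a finite set of events and an
   edge relation (edge u v : u references v as a parent), with edges only
   between events of the DAG, and no cycles. *)
Record opera_dag (E : finType) := OperaDag {
  events : {set E};
  edge : rel E;
  edge_in : forall u v, edge u v -> (u \in events) && (v \in events);
  edge_acyclic : forall u v, edge u v -> ~~ connect edge v u
}.

Section Opera.
Variables (E N : finType) (R : realFieldType) (cr : E -> N) (w : N -> R).

Definition reaches (G : opera_dag E) (u v : E) : bool := connect (edge G) u v.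

Definition leaves (G : opera_dag E) : {set E} :=
  [set v in events G | [forall u, edge G v u ==> (cr u != cr v)]].

Definition total_weight : R := \sum_(i : N) w i.

Definition reached_weight (G : opera_dag E) (S : {set E}) (r : E) : R :=
  \sum_(i in [set cr x | x in S & reaches G r x]) w i.

(* roots_aux G k = (R_{k+1}, R_1 :|: ... :|: R_{k+1}). *)
Fixpoint roots_aux (G : opera_dag E) (k : nat) : {set E} * {set E} :=
  match k with
  | 0 => (leaves G, leaves G)
  | k'.+1 =>
      let: (Rk, Uk) := roots_aux G k' in
      let Rn := [set r in events G |
                  (r \notin Uk) && (2 * total_weight / 3 < reached_weight G Rk r)] in
      (Rn, Uk :|: Rn)
  end.

(* R_j, the root set of frame j (meaningful for j >= 1). *)
Definition root_set (G : opera_dag E) (j : nat) : {set E} := (roots_aux G j.-1).1.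

Definition is_root (G : opera_dag E) (j : nat) (v : E) : bool :=
  (0 < j)%N && (v \in root_set G j).

Definition anc (G : opera_dag E) (v : E) : {set E} := [set u | reaches G v u].

(* G1[v] = G2[v]: same induced subgraph on v and its ancestors
   (creators are a global labelling, hence automatically equal). *)
Definition same_past (G1 G2 : opera_dag E) (v : E) : Prop :=
  anc G1 v = anc G2 v /\
  (forall x y, x \in anc G1 v -> y \in anc G1 v -> edge G1 x y = edge G2 x y).

Definition dag_sim (G1 G2 : opera_dag E) : Prop :=
  forall v, v \in events G1 -> v \in events G2 -> same_past G1 G2 v.

End Opera.

(* Main.v *)
Require Import Defs.
From HB Require Import structures.
From mathcomp Require Import all_boot all_order all_algebra.
Import Order.TTheory GRing.Theory Num.Theory.
Local Open Scope ring_scope.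

Lemma reach_events (E : finType) (G : opera_dag E) r x :
  connect (edge G) r x -> r \in events G -> x \in events G.
Proof.
case/connectP => p; elim: p r => [|y p IH] r /=; first by move=> _ ->.
case/andP => e pth xl hr; apply: (IH y pth xl).
by case/andP: (edge_in e).
Qed.

Lemma reach_eq (E : finType) (G1 G2 : opera_dag E) x y :
  same_past G1 G2 x -> reaches G1 x y = reaches G2 x y.
Proof.
case=> A _; have : (y \in anc G1 x) = (y \in anc G2 x) by rewrite A.
by rewrite !inE.
Qed.

Lemma edge_eq (E : finType) (G1 G2 : opera_dag E) x u :
  same_past G1 G2 x -> edge G1 x u = edge G2 x u.
Proof.
case=> A Ed.
have x1 : x \in anc G1 x by rewrite inE /reaches connect0.
case E1: (edge G1 x u).
  have u1 : u \in anc G1 x by rewrite inE /reaches connect1.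
  by rewrite -Ed.
case E2: (edge G2 x u) => //.
have u2 : u \in anc G2 x by rewrite inE /reaches connect1.
by rewrite -A in u2; rewrite -Ed // E1 in E2.
Qed.

Arguments reach_events {E G r x}.
Arguments reach_eq {E G1 G2 x} y.
Arguments edge_eq {E G1 G2 x} u.

Lemma aux_eq (E N : finType) (R : realFieldType) (cr : E -> N)
  (w : N -> R) (G1 G2 : opera_dag E) :
  dag_sim G1 G2 -> forall k x, x \in events G1 -> x \in events G2 ->
  ((x \in (roots_aux cr w G1 k).1) = (x \in (roots_aux cr w G2 k).1)) /\
  ((x \in (roots_aux cr w G1 k).2) = (x \in (roots_aux cr w G2 k).2)).
Proof.
move=> S; elim=> [|k IH] x Hx1 Hx2.
  have E0 : (x \in leaves cr G1) = (x \in leaves cr G2).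
    rewrite !inE Hx1 Hx2 /=.
    have SP := S x Hx1 Hx2.
    apply/forallP/forallP => H u; have := H u; by rewrite (edge_eq u SP).
  by rewrite /= E0.
rewrite /=.
case E1: (roots_aux cr w G1 k) IH => [R1 U1];
case E2: (roots_aux cr w G2 k) => [R2 U2] IH /=.
have SP := S x Hx1 Hx2.
have Hp : forall y, (y \in R1) && reaches G1 x y = (y \in R2) && reaches G2 x y.
  move=> y; rewrite -(reach_eq y SP).
  case Rch: (reaches G1 x y); last by rewrite !andbF.
  have y1 := reach_events Rch Hx1.
  have Rch2 : reaches G2 x y by rewrite -(reach_eq y SP).
  have y2 := reach_events Rch2 Hx2.
  by rewrite !andbT; case: (IH y y1 y2).
have Hw : reached_weight cr w G1 R1 x = reached_weight cr w G2 R2 x.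
  rewrite /reached_weight; apply: eq_bigl => i.
  apply/imsetP/imsetP => -[y Hy ->]; exists y => //; move: Hy; rewrite !inE.
    by rewrite Hp.
  by rewrite Hp.
have hR : (x \in [set r in events G1 | (r \notin U1) &&
          (2 * total_weight w / 3 < reached_weight cr w G1 R1 r)]) =
          (x \in [set r in events G2 | (r \notin U2) &&
          (2 * total_weight w / 3 < reached_weight cr w G2 R2 r)]).
  by rewrite !inE Hx1 Hx2 /= Hw; case: (IH x Hx1 Hx2) => _ ->.
split => //.
by rewrite !in_setU hR; case: (IH x Hx1 Hx2) => _ ->.
Qed.

Arguments reach_events {E G r x}.
Arguments reach_eq {E G1 G2 x} y.
Arguments edge_eq {E G1 G2 x} u.
Arguments aux_eq {E N R} cr w {G1 G2} S k {x}.

Theorem mainTheorem3 (E N : finType) (R : realFieldType) (cr : E -> N)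
  (w : N -> R) (w_pos : forall i, 0 < w i) (G1 G2 : opera_dag E) :
  dag_sim G1 G2 ->
  forall (v : E) (j : nat),
    v \in events G1 -> v \in events G2 -> (1 <= j)%N ->
    v \in root_set cr w G1 j -> v \in root_set cr w G2 j.
Proof.
move=> S v j H1 H2 _; rewrite /root_set.
by case: (aux_eq cr w S j.-1 H1 H2) => ->.
Qed.
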